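(* For every integer $n>2$, the number of triples $(x,y,z)\in\{1,\dots,n\}^3$ with $x<y<z$ and $\gcd(y-x,\,z-y,\,n)=1$ equals $\frac{n}{6}J_2(n)-\frac{n}{2}J_1(n)$.
   Context: Jordan's totient function of order $k\ge1$ is $J_k(n)=n^k\prod_{p\mid n,\ p\text{ prime}}\left(1-p^{-k}\right)$; in particular $J_1=\varphi$ is Euler's totient function. *)

(* Defs.v *)
From mathcomp Require Import all_boot all_order all_algebra.
Set Implicit Arguments. Unset Strict Implicit. Unset Printing Implicit Defensive.
Import Order.TTheory GRing.Theory Num.Theory.
Local Open Scope ring_scope.

Definition jordanJ (k n : nat) : rat :=
  (n%:R ^+ k) * \prod_(p <- primes n) (1 - (p%:R ^+ k)^-1).

Definition count_triples (n : nat) : nat :=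
  #|[set t : 'I_n.+1 * 'I_n.+1 * 'I_n.+1 |
      let: (x, y, z) := t in
      [&& (0 < x)%N, (x < y)%N, (y < z)%N &
          gcdn (gcdn (y - x)%N (z - y)%N) n == 1%N]]|.

(* Main.v *)
Require Import Defs.
From mathcomp Require Import all_boot all_order all_algebra.
From mathcomp Require Import zify ring lra.
Import GRing.Theory Num.Theory.
Set Implicit Arguments. Unset Strict Implicit. Unset Printing Implicit Defensive.


Lemma sum_lt N K : \sum_(0 <= x < N) (if x < K then 1 else 0) = minn N K.
Proof.
elim: N => [|N IH]; first by rewrite big_geq // min0n.
rewrite big_nat_recr //= IH; case: ifP => H; lia.
Qed.

Lemma sum_count N c :
  \sum_(0 <= x < N.+1) (if (0 < x) && (x + c <= N) then 1 else 0) = N - c.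
Proof.
rewrite big_nat_recl //= add0n.
rewrite (eq_bigr (fun x => if x < N - c then 1 else 0)); last first.
  move=> x _; rewrite ltn_subRL; case: ifP; case: ifP => //; lia.
rewrite sum_lt; lia.
Qed.

Lemma sum_mult p k (F : nat -> nat) : 0 < p ->
  \sum_(0 <= a < p * k) (if p %| a then F a else 0) = \sum_(0 <= a < k) F (p * a).
Proof.
move=> p0; elim: k => [|k IH]; first by rewrite muln0 !big_geq.
rewrite big_nat_recr //= -IH mulnS addnC (big_cat_nat _ (n := p * k)) //=; last lia.
congr (_ + _).
rewrite big_ltn; last lia.
rewrite dvdn_mulr // big1_seq ?addn0 //.
move=> a; rewrite mem_index_iota => /andP [Ha1 Ha].
case: ifP => // H; exfalso; move/dvdnP: H => [j Hj]; subst a; move: Ha; rewrite [j * p]mulnC addnC -mulnS !ltn_pmul2l //; lia.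
Qed.

Lemma sum_shift M x (H : nat -> nat) :
  \sum_(0 <= y < M) (if x < y then H y else 0) =
  \sum_(0 <= a < M) (if (0 < a) && (x + a < M) then H (x + a) else 0).
Proof.
case: (ltnP x M) => hx.
  rewrite (big_cat_nat _ (n := x.+1)) //= big1_seq ?add0n; last first.
    move=> y; rewrite mem_index_iota => Hy; case: ifP => //; lia.
  rewrite -{1}(add0n x.+1) big_addn.
  rewrite (big_cat_nat _ (n := M - x) (p := M)) //=; last lia.
  rewrite [X in _ = _ + X]big1_seq ?addn0; last first.
    move=> a; rewrite mem_index_iota => Ha; case: ifP => //; lia.
  have -> : M - x = (M - x.+1).+1 by lia.
  rewrite big_nat_recl //= add0n.
  apply: eq_big_nat => a Ha. rewrite ifT; last lia. rewrite ifT; last lia. congr H; lia.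
rewrite !big1_seq //.
  move=> a; rewrite mem_index_iota => Ha; case: ifP => //; lia.
move=> a; rewrite mem_index_iota => Ha; case: ifP => //; lia.
Qed.

Lemma triple_sum N (F : nat -> nat -> nat) :
 \sum_(0<=x<N.+1) \sum_(0<=y<N.+1) \sum_(0<=z<N.+1)
    (if [&& 0<x, x<y & y<z] then F (y-x) (z-y) else 0)
 = \sum_(0<=a<N) \sum_(0<=b<N) (if [&& 0<a, 0<b & a+b<N] then F a b * (N-a-b) else 0).
Proof.
transitivity (\sum_(0<=x<N.+1) \sum_(0<=a<N.+1) \sum_(0<=b<N.+1)
   (if [&& 0<x, 0<a, 0<b & x+a+b < N.+1] then F a b else 0)).
  apply: eq_bigr => x _.
  case: (posnP x) => [->|x0].
    by rewrite !big1 // => y _; rewrite big1.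
  transitivity (\sum_(0<=y<N.+1) (if x < y then
      \sum_(0<=z<N.+1) (if y<z then F (y-x) (z-y) else 0) else 0)).
    apply: eq_bigr => y _; case: ifP => xy; last by rewrite big1 // => z _; rewrite xy.
    by apply: eq_bigr => z _.
  rewrite sum_shift; apply: eq_bigr => a _.
  rewrite sum_shift; case: ifP => Ha.
    apply: eq_bigr => b _. rewrite /=.
    have -> : x + a - x = a by lia.
    have -> : x + a + b - (x + a) = b by lia.
    case: ifP => Hb; case: ifP => Hc //; exfalso; move: Ha Hb Hc; clear; lia.
  rewrite big1 // => b _; rewrite /=; case: ifP => //; move: Ha; clear; lia.
rewrite exchange_big /=.
transitivity (\sum_(0<=a<N.+1) \sum_(0<=b<N.+1)
   (if [&& 0<a, 0<b & a+b<N] then F a b * (N-a-b) else 0)); last first.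
  rewrite big_nat_recr //= [X in _ + X]big1 ?addn0; last first.
    by move=> b _; case: ifP => //; lia.
  apply: eq_bigr => a _; rewrite big_nat_recr //= ifN ?addn0 //; lia.
apply: eq_bigr => a _.
rewrite exchange_big /=.
apply: eq_bigr => b _. case: (boolP ((0 < a) && (0 < b))) => Hab.
  transitivity (F a b * (N - (a + b))).
    rewrite -sum_count big_distrr /=; apply: eq_bigr => x _.
    move/andP: Hab => [-> ->]. case: ifP => H1; case: ifP => H2 //=; try lia.
  move/andP: Hab => [-> ->] /=. case: ifP => H; first by rewrite subnDA.
  have -> : N - (a + b) = 0 by lia. by rewrite muln0.
rewrite big1 ?ifN //.
  by move: Hab; clear; lia.
move=> x _; case: ifP => //; move: Hab; clear; lia.
Qed.

Definition good (ps : seq nat) a b := all (fun q => ~~ ((q %| a) && (q %| b))) ps.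
Definition W m ps := \sum_(0<=a<m) \sum_(0<=b<m)
  (if [&& 0<a, 0<b, a+b<m & good ps a b] then m-a-b else 0).

Lemma W_rec p ps k : prime p -> all (fun q => coprime q p) ps ->
  W (p * k) ps = W (p * k) (p :: ps) + p * W k ps.
Proof.
move=> pp cop; have p0 := prime_gt0 pp.
have E2 : p * W k ps = \sum_(0<=a<p*k) (if p %| a then \sum_(0<=b<p*k) (if p %| b then
   (if [&& 0 < a, 0 < b, a + b < p * k & good ps a b] then p * k - a - b else 0) else 0) else 0).
  rewrite sum_mult // /W big_distrr /=; apply: eq_bigr => a _.
  rewrite sum_mult // big_distrr /=; apply: eq_bigr => b _.
  have -> : good ps (p * a) (p * b) = good ps a b.
    apply: eq_in_all => q qin /=.
    by have cq := allP cop q qin; rewrite !Gauss_dvdr.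
  rewrite !muln_gt0 p0 /= -mulnDr ltn_pmul2l // -!mulnBr.
  by case: ifP => //; rewrite muln0.
rewrite E2 /W -big_split /=; apply: eq_bigr => a _.
case: ifP => pa; last first.
  rewrite addn0; apply: eq_bigr => b _; done.
rewrite -big_split /=; apply: eq_bigr => b _; rewrite /good /=.
case: (p %| b) => /=; last by rewrite addn0. by rewrite !andbF.
Qed.

Lemma sum_C2 N K : K <= N ->
  \sum_(0 <= b < N) (if (0 < b) && (b < K) then K - b else 0) = 'C(K, 2).
Proof.
elim: K => [|K IH] hK.
  by rewrite big1 // => b _; rewrite andbF.
have cnt : \sum_(0 <= b < N) (if (0 < b) && (b < K.+1) then 1 else 0) = K.
  have -> : N = N.-1.+1 by lia.
  rewrite big_nat_recl //= add0n.
  rewrite (eq_bigr (fun b => if b < K then 1 else 0)) ?sum_lt; first lia.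
  by move=> b _; rewrite ltnS.
rewrite binS bin1.
transitivity (\sum_(0<=b<N)(if (0<b) && (b<K) then K-b else 0) +
   \sum_(0<=b<N)(if (0<b) && (b<K.+1) then 1 else 0)); last first.
  by rewrite IH ?cnt //; lia.
rewrite -big_split /=; apply: eq_bigr => b _.
case: (posnP b) => [->//|b0] /=.
case: (ltngtP b K) => h /=.
- rewrite ifT; last lia. rewrite ifT; last lia. lia.
- rewrite ifF; last lia. rewrite ifF; last lia. done.
- subst b. by rewrite ltnSn subSnn.
Qed.

Lemma sum_C3 m : \sum_(0 <= a < m) (if 0 < a then 'C(m - a, 2) else 0) = 'C(m, 3).
Proof.
elim: m => [|m IH]; first by rewrite big_geq.
rewrite binS -IH.
case: m IH => [|m] IH; first by rewrite big_nat1 big_geq.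
rewrite big_nat_recl // [in RHS]big_nat_recl //= !add0n big_nat_recl // addnC.
congr (_ + _); apply: eq_bigr => a _; by rewrite !subSS.
Qed.

Lemma W_nil m : W m [::] = 'C(m, 3).
Proof.
rewrite /W -sum_C3; apply: eq_big_nat => a Ha.
case: (posnP a) => [->|a0]; first by rewrite big1.
rewrite -(@sum_C2 m); last lia.
apply: eq_bigr => b _; rewrite /good /= andbT.
case: ifP => h; case: ifP => h' //; try lia.
Qed.

Local Open Scope ring_scope.

Definition P k ps : rat := \prod_(q <- ps) (1 - (q%:R ^+ k)^-1).
Definition f (m : nat) ps : rat :=
  m%:R / 6%:R * (m%:R ^+ 2 * P 2 ps - 3%:R * m%:R * P 1 ps + 2%:R * P 0 ps).

Lemma C3_f m : ('C(m, 3))%:R = f m [::].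
Proof.
rewrite /f /P !big_nil.
case: m => [|[|m]]; first by rewrite /= !mul0r.
  by rewrite bin_small //; field.
have H : ('C(m.+2, 3) * 6 = m.+2 * (m.+1 * m))%N.
  by rewrite (bin_ffact m.+2 3) !ffactnS ffactn0 muln1.
have -> : ('C(m.+2, 3))%:R = (m.+2 * (m.+1 * m))%:R / 6%:R :> rat.
  by rewrite -H natrM mulfK.
rewrite !natrM !mulr1 -[m.+2]addn2 -[m.+1]addn1 !natrD; by field.
Qed.

Lemma step_f (p k : nat) ps : (0 < p)%N ->
  f (p * k) ps - p%:R * f k ps = f (p * k) (p :: ps).
Proof.
move=> p0; have pn : p%:R != 0 :> rat by rewrite pnatr_eq0 -lt0n.
rewrite /f /P !big_cons /= expr0 invr1 subrr mul0r mulr0 addr0 natrM.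
set A := \prod_(_ <- _) _. set B := \prod_(_ <- _) _. set C := \prod_(_ <- _) _.
rewrite expr1; field; done.
Qed.

Lemma W_formula ps (m : nat) : uniq ps -> all prime ps -> all (fun q => q %| m)%N ps ->
  (W m ps)%:R = f m ps.
Proof.
elim: ps m => [|p ps IH] m; first by rewrite W_nil C3_f.
move=> /= /andP [pn u] /andP [pp pr] /andP [pm dm].
have p0 := prime_gt0 pp.
have [k Em] : exists k, m = (p * k)%N by exists (m %/ p)%N; rewrite mulnC divnK.
subst m.
have cop : all (fun q => coprime q p) ps.
  apply/allP => q qin; rewrite prime_coprime; last exact: (allP pr).
  rewrite dvdn_prime2 //; last exact: (allP pr).
  by apply/negP => /eqP E; rewrite -E qin in pn.
have dk : all (fun q => q %| k)%N ps.
  apply/allP => q qin; have := allP dm q qin.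
  by rewrite /= Gauss_dvdr // (allP cop).
have := W_rec k pp cop.
move=> E; have : (W (p * k) (p :: ps))%:R = (W (p * k) ps)%:R - p%:R * (W k ps)%:R :> rat.
  by rewrite E natrD natrM addrK.
by move=> ->; rewrite !IH // step_f.
Qed.

Lemma gcd_good n a b : (0 < n)%N ->
  (gcdn (gcdn a b) n == 1%N) = good (primes n) a b.
Proof.
move=> n0; apply/idP/idP.
  move/eqP => H; apply/allP => q; rewrite mem_primes => /and3P [pq _ qn].
  apply/negP => /andP [qa qb].
  have : (q %| gcdn (gcdn a b) n)%N by rewrite !dvdn_gcd qa qb qn.
  by rewrite H dvdn1 => /eqP q1; rewrite q1 in pq.
move=> G; case: eqP => // H; exfalso.
set d := gcdn (gcdn a b) n in H.
have d0 : (0 < d)%N by rewrite gcdn_gt0 n0 orbT.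
have d1 : (1 < d)%N by move: H d0; clear; lia.
have qd := pdiv_dvd d; have qp := pdiv_prime d1.
have qn : (pdiv d %| n)%N by apply: dvdn_trans qd (dvdn_gcdr _ _).
have qg : (pdiv d %| gcdn a b)%N by apply: dvdn_trans qd (dvdn_gcdl _ _).
have := allP G (pdiv d); rewrite mem_primes qp n0 qn => /(_ isT).
by move: qg; rewrite dvdn_gcd => ->.
Qed.

Lemma count_W n : (0 < n)%N -> count_triples n = W n (primes n).
Proof.
move=> n0.
pose F := fun a b => if gcdn (gcdn a b) n == 1%N then 1%N else 0%N.
transitivity (\sum_(x < n.+1) \sum_(y < n.+1) \sum_(z < n.+1)
   (if [&& (0 < x)%N, (x < y)%N & (y < z)%N] then F (y - x)%N (z - y)%N else 0%N))%N.
  rewrite pair_bigA pair_bigA /count_triples -sum1dep_card big_mkcond /=.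
  apply: eq_bigr => [[[x y] z]] _ /=.
  by rewrite /F; do 3 case: (_ < _)%N => //=; case: (_ == _).
transitivity (\sum_(0 <= x < n.+1) \sum_(0 <= y < n.+1) \sum_(0 <= z < n.+1)
   (if [&& (0 < x)%N, (x < y)%N & (y < z)%N] then F (y - x)%N (z - y)%N else 0%N))%N.
  rewrite big_mkord; apply: eq_bigr => x _; rewrite big_mkord; apply: eq_bigr => y _.
  by rewrite big_mkord.
rewrite triple_sum /W; apply: eq_big_nat => a Ha; apply: eq_big_nat => b Hb.
rewrite /F -gcd_good //.
move: Ha Hb; case: (0 < a)%N; case: (0 < b)%N; case: (a + b < n)%N => //= _ _.
by case: (_ == _); rewrite ?mul1n ?mul0n.
Qed.

Theorem mainTheorem5 (n : nat) (hn : (2 < n)%N) :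
  (count_triples n)%:R =
    (n%:R / 6%:R) * jordanJ 2 n - (n%:R / 2%:R) * jordanJ 1 n :> rat.
Proof.
have n0 : (0 < n)%N by lia.
rewrite count_W // W_formula //; last first.
- by apply/allP => q; rewrite mem_primes => /and3P [].
- by apply/allP => q; rewrite mem_primes => /and3P [].
- exact: primes_uniq.
have P0 : P 0 (primes n) = 0.
  have Hin : pdiv n \in primes n by rewrite mem_primes pdiv_prime ?pdiv_dvd ?n0 //; lia.
  rewrite /P (perm_big _ (perm_to_rem Hin)) big_cons /=.
  by rewrite expr0 invr1 subrr mul0r.
rewrite /f /jordanJ P0 -/(P 2 (primes n)) -/(P 1 (primes n)).
by rewrite expr1; field.
Qed.
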